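(* Let $F:\mathbb{R}^n\to\mathbb{R}$ be convex and $h:\mathbb{R}^n\to\mathbb{R}^p$ with $-h$ convex, both continuous, let $\emptyset\ne I\subseteq\{1,\dots,n\}$, and consider the convex binary MINLP $\min\{F(x): h(x)\ge 0,\ x_i\in\{0,1\}\text{ for } i\in I\}$, where $\{x: h(x)\ge 0\}$ is nonempty and compact. Let $X:=\{x\in\mathbb{R}^n: h(x)\ge 0,\ x_I\in[0,1]^I\}$, $Y:=\{0,1\}^I$ and $$\min_{x,y}\ \|x_I-y\|_1 \quad\text{s.t.}\quad x\in X,\ y\in Y. \qquad (\ast)$$ The idealized feasibility pump for this convex MINLP (starting from a solution $x^0$ of the continuous relaxation and $y^0$ the rounding of $x^0_I$, alternately computing $x^{k+1}\in\arg\min_{x\in X}\|x_I-y^k\|_1$ as a global minimizer and $y^{k+1}\in\arg\min_{y\in Y}\|x^{k+1}_I-y\|_1$ as the rounding of $x^{k+1}_I$ with ties broken lexicographically minimally, without random perturbations, and stopping as soon as the iterate is a partial minimum of $(\ast)$) is the alternating direction method applied to $(\ast)$. It terminates at a partial minimum $(x^*,y^* )$ of $(\ast)$ after a finite number of iterations. If this partial minimum has objective value $\|x^*_I-y^*\|_1=0$, then $(x^*,y^* )$ is feasible for the convex MINLP (i.e., $x^*$ is feasible for it).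
   Context: A point $(x^*,y^* )\in X\times Y$ is a partial minimum of $(\ast)$ if $\|x^*_I-y^*\|_1\le\|x_I-y^*\|_1$ for all $x\in X$ and $\|x^*_I-y^*\|_1\le \|x^*_I-y\|_1$ for all $y\in Y$. $x_I$ denotes the subvector of $x$ with components indexed by $I$. *)

(* Defs.v *)
From HB Require Import structures.
From mathcomp Require Import all_boot all_order all_algebra.
From mathcomp Require Import all_classical all_reals all_analysis.
Unset Printing Implicit Defensive.

Import Order.TTheory GRing.Theory Num.Theory.
Import numFieldNormedType.Exports.
Local Open Scope classical_set_scope.
Local Open Scope ring_scope.

Section FP.
Context {R : realType} {n p : nat}.

Definition convex_fun (f : 'rV[R]_n -> R) : Prop :=
  forall (x y : 'rV[R]_n) (t : R), 0 <= t -> t <= 1 ->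
    f (t *: x + (1 - t) *: y) <= t * f x + (1 - t) * f y.

Definition idx (I : {set 'I_n}) := {i : 'I_n | i \in I}.
Definition binvec (I : {set 'I_n}) := idx I -> bool.

Definition hfeas (h : 'rV[R]_n -> 'rV[R]_p) : set 'rV[R]_n :=
  [set x | forall j : 'I_p, 0 <= h x ord0 j].

Definition inX (h : 'rV[R]_n -> 'rV[R]_p) (I : {set 'I_n}) (x : 'rV[R]_n) : Prop :=
  hfeas h x /\ (forall i : 'I_n, i \in I -> 0 <= x ord0 i /\ x ord0 i <= 1).

Definition obj (I : {set 'I_n}) (x : 'rV[R]_n) (y : binvec I) : R :=
  \sum_(i : idx I) `| x ord0 (val i) - (y i)%:R |.

(* rounding of x_I with ties (x_i = 1/2) broken lexicographically minimally, i.e. to 0 *)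
Definition round (I : {set 'I_n}) (x : 'rV[R]_n) : binvec I :=
  fun i => (1 / 2 < x ord0 (val i)).

Definition partial_min (h : 'rV[R]_n -> 'rV[R]_p) (I : {set 'I_n})
    (xs : 'rV[R]_n) (ys : binvec I) : Prop :=
  inX h I xs /\
  (forall x, inX h I x -> obj I xs ys <= obj I x ys) /\
  (forall y : binvec I, obj I xs ys <= obj I xs y).

Definition minlp_feasible (h : 'rV[R]_n -> 'rV[R]_p) (I : {set 'I_n}) (x : 'rV[R]_n) : Prop :=
  hfeas h x /\ (forall i : 'I_n, i \in I -> x ord0 i = 0 \/ x ord0 i = 1).

(* a run of the idealized feasibility pump: x 0 solves the continuous relaxation,
   y k is the rounding of x k, and as long as no iterate up to k is a partial
   minimum (stopping rule), x (k+1) is a global minimizer of ||x_I - y k||_1 over X *)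
Definition fp_run (F : 'rV[R]_n -> R) (h : 'rV[R]_n -> 'rV[R]_p) (I : {set 'I_n})
    (x : nat -> 'rV[R]_n) (y : nat -> binvec I) : Prop :=
  (inX h I (x 0%N) /\ forall z, inX h I z -> F (x 0%N) <= F z) /\
  (forall k, y k = round I (x k)) /\
  (forall k, (forall j, (j <= k)%N -> ~ partial_min h I (x j) (y j)) ->
     inX h I (x k.+1) /\ forall z, inX h I z -> obj I (x k.+1) (y k) <= obj I z (y k)).

End FP.

(* Main.v *)
Require Import Defs.
From HB Require Import structures.
From mathcomp Require Import all_boot all_order all_algebra.
From mathcomp Require Import all_classical all_reals all_analysis.
Import Order.TTheory GRing.Theory Num.Theory.
Import numFieldNormedType.Exports.
Local Open Scope classical_set_scope.
Local Open Scope ring_scope.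

From mathcomp Require Import lra.

Lemma half_le1 (R : realType) (a : R) : 1 / 2 < a -> `|a - 1| <= `|a|.
Proof. move=> Ha; rewrite (@gtr0_norm _ a); last lra. rewrite ler_norml; apply/andP; split; lra. Qed.

Lemma half_le0 (R : realType) (a : R) : ~~ (1 / 2 < a) -> `|a| <= `|a - 1|.
Proof.
rewrite -leNgt => Ha.
have [h0|h0] := lerP 0 a; [rewrite ger0_norm // | rewrite ltr0_norm //];
  rewrite ler_normr; apply/orP; right; lra.
Qed.

Lemma round_min (R : realType) (n : nat) (I : {set 'I_n}) (x : 'rV[R]_n) (y : binvec I) :
  obj I x (round I x) <= obj I x y.
Proof.
apply: ler_sum => i _; rewrite /round.
case H: (1 / 2 < x ord0 (val i)); case: (y i) => //=.
- by rewrite subr0; apply: half_le1; rewrite H.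
- by rewrite subr0; apply: half_le0; rewrite H.
Qed.

Theorem mainTheorem3 (R : realType) (n p : nat)
    (F : 'rV[R]_n -> R) (h : 'rV[R]_n -> 'rV[R]_p) (I : {set 'I_n})
    (HFconv : convex_fun F) (HFcont : continuous F)
    (Hhconv : forall j : 'I_p, convex_fun (fun x => - h x ord0 j))
    (Hhcont : continuous h)
    (HI : I != finset.set0)
    (Hne : hfeas h !=set0) (Hcpt : compact (hfeas h))
    (x : nat -> 'rV[R]_n) (y : nat -> binvec I)
    (Hrun : fp_run F h I x y) :
  exists K : nat,
    (forall k, (k < K)%N -> ~ partial_min h I (x k) (y k)) /\
    partial_min h I (x K) (y K) /\
    (obj I (x K) (y K) = 0 -> minlp_feasible h I (x K)).
Proof.
move: Hrun => [[Hx0 _] [Hy Hstep]].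
have Hex : exists K, partial_min h I (x K) (y K).
{ apply: contrapT => /forallNP Hno.
  have Hs k := Hstep k (fun j _ => Hno j).
  have HX k : inX h I (x k) by case: k => [|k]; [exact Hx0 | exact (Hs k).1].
  pose w := fun k => obj I (x k.+1) (y k).
  have Hdec k : w k.+1 < w k.
  { have Hnp := Hno k.+1.
    have : ~ (forall z, inX h I z -> obj I (x k.+1) (y k.+1) <= obj I z (y k.+1)).
    { move=> Hall; apply: Hnp; split; first exact: HX. split; first exact Hall.
      by move=> y'; rewrite Hy; exact: round_min. }
    move=> /existsNP [z /not_implyP [Hz /negP]]; rewrite -ltNge => Hlt.
    rewrite /w.
    apply: (le_lt_trans ((Hs k.+1).2 z Hz)).
    apply: (lt_le_trans Hlt).
    by rewrite Hy; exact: round_min. }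
  have Hmono k l : (k < l)%N -> w l < w k.
  { elim: l => // l IH; rewrite ltnS leq_eqVlt => /orP[/eqP->|/IH H]; first exact: Hdec.
    exact: lt_trans (Hdec l) H. }
  have Hne' k l : (k < l)%N -> y k <> y l.
  { move=> Hkl E; have := Hmono k l Hkl.
    have := (Hs k).2 (x l.+1) (HX _). rewrite /w -E => H1 H2.
    by move: (le_lt_trans H1 H2); rewrite ltxx. }
  pose g := fun (yy : binvec I) => [ffun i : 'I_n => if (insub i : option (idx I)) is Some j then yy j else false] : {ffun 'I_n -> bool}.
  have ginj : injective g.
  { move=> y1 y2 E; apply: funext => j.
    have := congr1 (fun f : {ffun 'I_n -> bool} => f (val j)) E; rewrite /= /g !ffunE.
    by rewrite valK. }
  pose N := #|{ffun 'I_n -> bool}|.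
  pose f := fun i : 'I_N.+1 => g (y i).
  have finj : injective f.
  { move=> i j /ginj E; apply: val_inj => /=.
    case: (ltngtP i j) => // Hij; exfalso.
    - exact: Hne' Hij E.
    - exact: Hne' Hij (esym E). }
  by have := leq_card f finj; rewrite card_ord ltnn. }
pose P := fun k => `[< partial_min h I (x k) (y k) >].
have exP : exists k, P k by case: Hex => K HK; exists K; apply/asboolP.
case: (ex_minnP exP) => K /asboolP HK Hmin.
exists K; split; last split => //.
- move=> k hk hpk; have := Hmin k (asboolT hpk); by rewrite leqNgt hk.
- move=> H0; split; first exact: HK.1.1.
  move=> i Hi.
  have := @psumr_eq0P _ _ _ _ (fun j _ => normr_ge0 _) H0 (exist _ i Hi : idx I) isT.
  move=> /normr0_eq0 /subr0_eq /=; case: (y K _) => /= ->; by [right | left].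
Qed.
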